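(* Let $T>0$, $\mathcal{R}=\frac{2\pi}{T}$, and assume that $\mathcal{R}^{-2}=\left(\frac{T}{2\pi}\right)^2$ has irrationality measure equal to $2$. For $m,k\in\mathbb{Z}$ set \[ \lambda_2^+(m,k)=\left|\mathcal{R}|m|-\sqrt{1+k^2}\right|. \] Then there exists a constant $\widetilde{c}>0$ such that $\lambda_2^+(m,k)>\frac{\widetilde{c}}{(1+k^2)^2}$ for all $m,k\in\mathbb{Z}$.
   Context: The irrationality measure of a real number $r$ is the infimum of all $\rho$ for which there exists a constant $c$ such that $\frac{c}{q^\rho}<|r-\frac{p}{q}|$ for all $\frac{p}{q}\in\mathbb{Q}$. (In the paper, $\lambda_2^+(m,k)$ is the smaller positive eigenvalue of the Hermitian matrix $\mathrm{diag}(1,1,-1,-1)-\mathcal{R}imM_1-ikM_2$.) *)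

(* Defs.v *)
From Stdlib Require Import Reals ZArith.
Open Scope R_scope.

Definition irr_exponent_ok (r rho : R) : Prop :=
  exists c : R, 0 < c /\
    forall p q : Z, (0 < q)%Z -> c / Rpower (IZR q) rho < Rabs (r - IZR p / IZR q).

(* "the irrationality measure of r equals mu": mu is the infimum (greatest
   lower bound) of the set of admissible exponents.  If that set is empty
   (infimum +oo) no real mu satisfies this. *)
Definition irrationality_measure_eq (r mu : R) : Prop :=
  (forall rho, irr_exponent_ok r rho -> mu <= rho) /\
  (forall b, (forall rho, irr_exponent_ok r rho -> b <= rho) -> b <= mu).

Definition Rcal (T : R) : R := 2 * PI / T.

Definition lambda2plus (T : R) (m k : Z) : R :=
  Rabs (Rcal T * IZR (Z.abs m) - sqrt (1 + IZR k ^ 2)).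

(* Main.v *)
Require Import Defs.
From Stdlib Require Import Reals ZArith Lra Psatz Classical.
Open Scope R_scope.

Lemma get_rho (r : R) (h : irrationality_measure_eq r 2) :
  exists rho, rho <= 5/2 /\ irr_exponent_ok r rho.
Proof.
  destruct h as [_ h2].
  apply NNPP; intro H.
  assert (5/2 <= 2).
  { apply h2. intros rho Hr. destruct (Rle_dec rho (5/2)) as [a|a].
    - exfalso; apply H; exists rho; auto.
    - lra. }
  lra.
Qed.

Lemma rpow52 (q : R) : 1 <= q -> Rpower q (5/2) = q ^ 2 * sqrt q.
Proof.
  intro hq.
  replace (5/2) with (INR 2 + / 2) by (simpl; lra).
  rewrite Rpower_plus, Rpower_pow, Rpower_sqrt by lra. reflexivity.
Qed.

Theorem proposition5p2 (T : R) (hT : 0 < T)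
  (hmeas : irrationality_measure_eq ((T / (2 * PI)) ^ 2) 2) :
  exists ct : R, 0 < ct /\
    forall m k : Z, lambda2plus T m k > ct / (1 + IZR k ^ 2) ^ 2.
Proof.
  destruct (get_rho _ hmeas) as [rho [hrho [c [hc hok]]]].
  set (R0 := Rcal T).
  assert (hR0 : 0 < R0) by (unfold R0, Rcal; pose proof PI_RGT_0; apply Rdiv_lt_0_compat; lra).
  assert (hr : R0 ^ 2 * (T / (2 * PI)) ^ 2 = 1).
  { unfold R0, Rcal. pose proof PI_RGT_0. field. lra. }
  exists (Rmin (1/2) (R0 ^ 2 * c / 3)).
  split.
  { apply Rmin_glb_lt; [lra|]. apply Rdiv_lt_0_compat; [|lra]. apply Rmult_lt_0_compat; [nra|lra]. }
  intros m k.
  unfold lambda2plus. fold R0.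
  set (r := (T / (2 * PI)) ^ 2) in *.
  set (n := IZR (Z.abs m)).
  set (q := 1 + IZR k ^ 2).
  assert (hn : 0 <= n) by (apply IZR_le; lia).
  assert (hq : 1 <= q) by (unfold q; nra).
  set (s := sqrt q).
  assert (hs2 : s * s = q) by (apply sqrt_sqrt; lra).
  assert (hs : 1 <= s) by (unfold s; rewrite <- sqrt_1; apply sqrt_le_1_alt; lra).
  set (ct := Rmin (1/2) (R0 ^ 2 * c / 3)).
  assert (hct1 : ct <= 1/2) by apply Rmin_l.
  assert (hct2 : ct <= R0 ^ 2 * c / 3) by apply Rmin_r.
  assert (hq2 : 1 <= q ^ 2) by nra.
  set (L := Rabs (R0 * n - s)).
  destruct (Rle_dec 1 L) as [hL|hL].
  { apply Rlt_le_trans with 1; [|lra].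
    apply Rle_lt_trans with ct; [|lra].
    unfold Rdiv. assert (0 < / q^2 <= 1) by (split; [apply Rinv_0_lt_compat; lra | rewrite <- Rinv_1; apply Rinv_le_contravar; lra]).
    assert (0 < ct) by (unfold ct; apply Rmin_glb_lt; [lra|]; apply Rdiv_lt_0_compat; [|lra]; apply Rmult_lt_0_compat; [nra|lra]).
    nra. }
  assert (hqz : (0 < 1 + k ^ 2)%Z) by nia.
  specialize (hok (Z.abs m ^ 2)%Z (1 + k ^ 2)%Z hqz).
  assert (e1 : IZR (Z.abs m ^ 2) = n ^ 2) by (unfold n; rewrite pow_IZR; reflexivity).
  assert (e2 : IZR (1 + k ^ 2) = q) by (unfold q; rewrite plus_IZR, pow_IZR; reflexivity).
  rewrite e1, e2 in hok.
  assert (hP : Rpower q rho <= q ^ 2 * s).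
  { unfold s; rewrite <- rpow52 by lra. apply Rle_Rpower; lra. }
  assert (hPpos : 0 < Rpower q rho) by (unfold Rpower; apply exp_pos).
  assert (hb : c / (q ^ 2 * s) <= c / Rpower q rho).
  { apply Rmult_le_compat_l; [lra|]. apply Rinv_le_contravar; auto. }
  assert (hid : Rabs (R0 ^ 2 * n ^ 2 - q) = R0 ^ 2 * q * Rabs (r - n ^ 2 / q)).
  { replace (R0 ^ 2 * n ^ 2 - q) with ((- (R0 ^ 2 * q)) * (r - n ^ 2 / q)).
    - rewrite Rabs_mult, Rabs_Ropp, Rabs_right; [reflexivity|]. nra.
    - assert (E: - (R0^2*q)*(r - n^2/q) = -(R0^2*r)*q + R0^2*n^2) by (field; lra).
      rewrite E, hr. ring. }
  assert (hfac : L * (R0 * n + s) = Rabs (R0 ^ 2 * n ^ 2 - q)).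
  { unfold L. rewrite <- (Rabs_right (R0 * n + s)) by nra. rewrite <- Rabs_mult.
    f_equal. rewrite <- hs2. ring. }
  assert (hlow : R0 ^ 2 * q * (c / (q ^ 2 * s)) < L * (R0 * n + s)).
  { rewrite hfac, hid. apply Rmult_lt_compat_l; [nra|]. lra. }
  assert (hsimp : R0 ^ 2 * q * (c / (q ^ 2 * s)) = R0 ^ 2 * c / (q * s)).
  { field. split; lra. }
  rewrite hsimp in hlow.
  assert (hRn : R0 * n < s + 1).
  { unfold L in hL. pose proof (Rle_abs (R0 * n - s)). lra. }
  assert (hL0 : 0 <= L) by apply Rabs_pos.
  assert (h3 : L * (R0 * n + s) <= L * (3 * s)) by (apply Rmult_le_compat_l; lra).
  assert (hfin : R0 ^ 2 * c / 3 / q ^ 2 < L).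
  { assert (hh : R0 ^ 2 * c / (q * s) < L * (3 * s)) by lra.
    assert (e : R0 ^ 2 * c / 3 / q ^ 2 = (R0 ^ 2 * c / (q * s)) / (3 * s)).
    { field_simplify; [| lra | lra]. rewrite <- hs2. field. lra. }
    rewrite e. apply Rmult_lt_reg_r with (3 * s); [lra|].
    unfold Rdiv at 1. rewrite Rmult_assoc, Rinv_l, Rmult_1_r by lra. lra. }
  apply Rle_lt_trans with (R0 ^ 2 * c / 3 / q ^ 2); [|exact hfin].
  unfold Rdiv. apply Rmult_le_compat_r; [|exact hct2].
  left; apply Rinv_0_lt_compat; lra.
Qed.
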